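(* Let $\ell$ be a positive odd integer with at most $t$ distinct prime factors. Suppose there exist $t+1$ primes $p_1<p_2<\cdots<p_{t+1}$ with $p_1\ge 3$ such that any two of $p_1-1,\dots,p_{t+1}-1$ have no common odd prime factor. Then for every integer $n$ with $p_{t+1}-1\le n\le 2p_1-2$, $\Omega_\ell(n)$ is not a powerful number.
   Context: A positive integer $a$ is called a powerful number if for every prime $p$, $p\mid a$ implies $p^2\mid a$. $\Omega_\ell(n)=\prod_{a=1}^{n}(a^\ell+1)$. *)

(* Defs.v *)
From mathcomp Require Import all_boot.
Set Implicit Arguments. Unset Strict Implicit. Unset Printing Implicit Defensive.

Definition powerful (a : nat) : Prop :=
  0 < a /\ forall p : nat, prime p -> p %| a -> p ^ 2 %| a.

Definition Omega (l n : nat) : nat := \prod_(1 <= a < n.+1) (a ^ l + 1).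

(* Main.v *)
Require Import Defs.
From mathcomp Require Import all_boot all_algebra all_field.
From mathcomp Require Import ring lra zify.
Import GRing.Theory Num.Theory.

Lemma sign_odd (R : pzRingType) (w : nat) : odd w -> ((-1 : R) ^+ w = -1)%R.
Proof. by move=> ow; rewrite -signr_odd ow expr1. Qed.

Lemma root_unique {p l a : nat} : prime p -> odd p -> coprime l p.-1 -> 0 < l ->
  p %| a ^ l + 1 -> p %| a.+1.
Proof.
move=> pp op cop l0 H.
have ch := pchar_Fp pp.
move: H; rewrite (dvdn_pcharf ch).
rewrite natrD natrX => /eqP H.
rewrite (dvdn_pcharf ch) -[a.+1]addn1 natrD.
set x : 'F_p := a%:R%R in H *.
have [u _ hu] := Bezoutr (p.-1) l0.
move: hu; rewrite gcdnC (eqP cop) => /dvdnP [w hw].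
have p1 : p = (p.-1).+1 by rewrite prednK // prime_gt0.
have ferm : forall v, (x ^+ (1 + v * p.-1) = x)%R.
  elim=> [|v IH]; first by rewrite expr1.
  rewrite mulSn addnCA exprD IH -exprSr -p1.
  by have := expf_card x; rewrite (card_Fp pp).
have ow : odd w.
  have : odd (w * l).
    by rewrite -hw /= oddM; move: op; rewrite p1 /= => /negbTE ->; rewrite andbF.
  by rewrite oddM => /andP [].
have xl : (x ^+ l = -1)%R by apply/eqP; rewrite -addr_eq0 H.
rewrite -(ferm u) hw mulnC exprM xl sign_odd //.
by rewrite addNr.
Qed.

Lemma binom_int (q k : nat) : exists c : int,
  ((q%:Z) ^+ k = (-1) ^+ k * (1 - (k%:Z) * (q%:Z + 1)) + c * (q%:Z + 1) ^+ 2)%R.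
Proof.
elim: k => [|k [c IH]]; first by exists 0; rewrite !expr0; ring.
exists (q%:Z * c - (-1) ^+ k * k%:Z)%R.
rewrite {1}exprS IH -[k.+1]addn1 PoszD exprD expr1.
set s := ((-1 : int) ^+ k)%R.
ring.
Qed.

Lemma sq_not_dvd (q l : nat) : odd l -> (q.+1) ^ 2 %| q ^ l + 1 -> q.+1 %| l.
Proof.
move=> ol /dvdnP [m hm].
have [c hc] := binom_int q l.
have e := congr1 (fun n : nat => (n%:R : int)%R) hm.
rewrite /= natrD natrM !natrX !natz -[q.+1]addn1 PoszD hc sign_odd // in e.
have e2 : (((m : int) - c) * (q + 1 : int) * (q + 1 : int) = (l : int) * (q + 1 : int))%R.
  rewrite -mulrA -expr2 mulrBl -e; ring.
have e3 := mulIf _ e2.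
have : (q + 1 : int)%R != 0%R by apply/eqP; lia.
move=> /e3 {e3} e3.
apply/dvdnP; exists (absz ((m : int) - c)%R).
have := congr1 absz e3; rewrite abszM /= => <-.
by congr (_ * _); rewrite -addn1.
Qed.

Lemma dvd_pm1 (P l : nat) : prime P -> odd l -> P %| P.-1 ^ l + 1.
Proof.
move=> pP ol.
have ch := pchar_Fp pP.
rewrite (dvdn_pcharf ch) natrD natrX.
have -> : (P.-1%:R : 'F_P)%R = (-1)%R.
  apply/eqP; rewrite -addr_eq0 -[(1 : 'F_P)%R]/(1%:R)%R -natrD addn1 prednK ?prime_gt0 //.
  by rewrite -(dvdn_pcharf ch).
by rewrite sign_odd // addNr.
Qed.

Lemma mult1 (x y : nat) : 0 < x -> y %| x -> x < 2 * y -> x = y.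
Proof.
move=> x0 /dvdnP [k hk] h; subst x.
have y0 : 0 < y by move: x0; rewrite muln_gt0 => /andP [].
rewrite ltn_pmul2r // in h.
have : k = 1 by move: x0; rewrite muln_gt0 => /andP [] k0 _; lia.
by move=> ->; rewrite mul1n.
Qed.
Theorem lemma4 (l t : nat) (p : nat -> nat) :
  0 < l -> odd l -> size (primes l) <= t ->
  (forall i, i <= t -> prime (p i)) ->
  (forall i j, i < j -> j <= t -> p i < p j) ->
  3 <= p 0 ->
  (forall i j, i < j -> j <= t -> forall q, prime q -> odd q ->
      ~~ ((q %| (p i).-1) && (q %| (p j).-1))) ->
  forall n : nat, (p t).-1 <= n -> n <= 2 * p 0 - 2 -> ~ powerful (Omega l n).
Proof.
move=> l0 ol hl pr mono p0 hodd n hn1 hn2 [Opos Hpow].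
have pge : forall i, i <= t -> p 0 <= p i.
  by case=> [//|i] hi; apply: ltnW; apply: mono.
have ple : forall i, i <= t -> p i <= p t.
  move=> i hi; case: (ltngtP i t) => h; first by apply: ltnW; apply: mono.
    by move: hi; rewrite leqNgt h.
  by rewrite h.
have pt2 : p t <= 2 * p 0 - 1 by lia.
have oddq : forall q, q \in primes l -> prime q /\ odd q.
  move=> q; rewrite mem_primes => /and3P [pq _ ql]; split => //.
  case: (even_prime pq) => // q2; move: ql; rewrite q2 dvdn2 ol //.
have key : forall x y, x <= t -> y <= t -> p x %| (p y).-1 -> False.
  move=> x y hx hy hd.
  have py3 : 3 <= p y by apply: leq_trans (pge y hy).
  have e' : (p y).-1 = p x.
    apply: (@mult1 _ _ _ hd); first by lia.
    have := pge x hx; have := ple y hy; lia.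
  have := pr y hy; case/even_prime => h; first by lia.
  have := pr x hx; case/even_prime => h'; first by have := pge x hx; lia.
  have e2 : p y = (p x).+1 by lia.
  by move: h; rewrite e2 /= h'.
pose bad i := has (fun q => (q %| (p i).-1) || (q == p i)) (primes l).
have [i hi good] : exists2 i, i <= t & ~~ bad i.
  case: (boolP (has (fun i => ~~ bad i) (iota 0 t.+1))).
    by case/hasP => i; rewrite mem_iota add0n ltnS => /andP [_ ?] ?; exists i.
  move/hasPn => allbad; exfalso.
  pose f i := nth 0 (primes l) (find (fun q => (q %| (p i).-1) || (q == p i)) (primes l)).
  have fin : forall i, i <= t -> f i \in primes l.
    move=> i hi; apply: mem_nth; rewrite -has_find.
    by have := allbad i; rewrite mem_iota add0n ltnS hi => /(_ isT); rewrite negbK.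
  have fP : forall i, i <= t -> (f i %| (p i).-1) || (f i == p i).
    move=> i hi.
    have hb : bad i by have := allbad i; rewrite mem_iota add0n ltnS hi => /(_ isT); rewrite negbK.
    exact: (nth_find 0 hb).
  have finj : {in iota 0 t.+1 &, injective f}.
    move=> i j; rewrite !mem_iota !add0n !ltnS => /andP [_ hi] /andP [_ hj] hf.
    have [pq oq] := oddq _ (fin i hi).
    have hfi := fP i hi; have hfj := fP j hj; rewrite hf in hfi pq oq.
    case: (ltngtP i j) => // h.
    - case/orP: hfi => [di|/eqP ei]; case/orP: hfj => [dj|/eqP ej].
      + by have := hodd i j h hj _ pq oq; rewrite di dj.
      + by exfalso; apply: (key j i hj hi); rewrite -ej.
      + by exfalso; apply: (key i j hi hj); rewrite -ei.
      + by have := mono i j h hj; rewrite -ei -ej ltnn.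
    - case/orP: hfi => [di|/eqP ei]; case/orP: hfj => [dj|/eqP ej].
      + by have := hodd j i h hi _ pq oq; rewrite di dj.
      + by exfalso; apply: (key j i hj hi); rewrite -ej.
      + by exfalso; apply: (key i j hi hj); rewrite -ei.
      + by have := mono j i h hi; rewrite -ei -ej ltnn.
  have : size (map f (iota 0 t.+1)) <= size (primes l).
    apply: uniq_leq_size; first by rewrite map_inj_in_uniq ?iota_uniq.
    by move=> x /mapP [i]; rewrite mem_iota add0n ltnS => /andP [_ hi] ->; apply: fin.
  rewrite size_map size_iota; lia.
set P := p i.
have pP : prime P := pr i hi.
have P3 : 3 <= P by apply: leq_trans (pge i hi).
have oP : odd P by case: (even_prime pP) => // h; move: P3; rewrite h.
have Pl : ~~ (P %| l).
  apply/negP => Pd; move/hasPn: good => /(_ P); rewrite mem_primes pP l0 Pd eqxx orbT.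
  by move=> /(_ isT).
have cop : coprime l P.-1.
  rewrite /coprime; apply/negPn/negP => hne.
  have d1 : 1 < gcdn l P.-1 by have := gcdn_gt0 l P.-1; rewrite l0 /=; move: hne; lia.
  have pd := pdiv_prime d1.
  have dd := pdiv_dvd (gcdn l P.-1).
  move/hasPn: good => /(_ (pdiv (gcdn l P.-1))).
  rewrite mem_primes pd l0 (dvdn_trans dd (dvdn_gcdl _ _)) (dvdn_trans dd (dvdn_gcdr _ _)).
  by move=> /(_ isT).
have PP : P.-1.+1 = P by rewrite prednK // prime_gt0.
have Pt : P <= p t := ple i hi.
have Pge : p 0 <= P := pge i hi.
have qin : P.-1 \in index_iota 1 n.+1 by rewrite mem_index_iota; lia.
have split : Omega l n = (P.-1 ^ l + 1) * \prod_(a <- index_iota 1 n.+1 | a != P.-1) (a ^ l + 1).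
  by rewrite /Omega (bigD1_seq _ qin) ?iota_uniq.
have corest : coprime P (\prod_(a <- index_iota 1 n.+1 | a != P.-1) (a ^ l + 1)).
  rewrite prime_coprime // Euclid_dvd_prod // big_has_cond.
  apply/hasPn => a; rewrite mem_index_iota => ha /=; apply/negP => /andP [ne da].
  have db := root_unique pP oP cop l0 da.
  have : a.+1 = P by apply: mult1 => //; lia.
  by move=> ea; move: ne; rewrite -ea /= eqxx.
have Pd : P %| Omega l n by rewrite split dvdn_mulr // dvd_pm1.
have := Hpow P pP Pd; rewrite split Gauss_dvdl; last by apply: coprimeXl.
rewrite -{1}PP => /sq_not_dvd; rewrite PP => /(_ ol).
by apply/negP.
Qed.
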